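(* Let $T$ be a strongly consistent $\mathcal{L}$-theory in $RGL^*$. Then there exist a first-order language $\hat{\mathcal{L}}\supseteq\mathcal{L}$ and a maximally strongly consistent Henkin $\hat{\mathcal{L}}$-theory $\hat T$ with $T\subseteq\hat T$.
   Context: $\mathcal{L}$ is a first-order language with countably many predicate, function and constant symbols. Formulas of $RGL^*$ are built from atomic formulas and the nullary connectives $\bar r$ ($r\in[0,1]\cap\mathbb{Q}$, including $\bar0,\bar1$) by $\wedge,\to,\forall,\exists$; $\neg\varphi:=\varphi\to\bar1$, $\varphi\vee\psi:=((\varphi\to\psi)\to\psi)\wedge((\psi\to\varphi)\to\varphi)$, $\varphi\leftrightarrow\psi:=(\varphi\to\psi)\wedge(\psi\to\varphi)$. Proof system $\vdash$: all instances of (G1) $(\varphi\to\psi)\to((\psi\to\chi)\to(\varphi\to\chi))$; (G2) $(\varphi\wedge\psi)\to\varphi$; (G3) $(\varphi\wedge\psi)\to(\psi\wedge\varphi)$; (G4) $\varphi\to(\varphi\wedge\varphi)$; (G5) $(\varphi\to(\psi\to\chi))\leftrightarrow((\varphi\wedge\psi)\to\chi)$; (G6) $((\varphi\to\psi)\to\chi)\to(((\psi\to\varphi)\to\chi)\to\chi)$; (G7) $\bar1\to\varphi$; (G$\forall$1) $(\forall x\,\varphi(x))\to\varphi(t)$; (G$\forall$2) $\forall x(\psi\to\varphi(x))\to(\psi\to\forall x\,\varphi(x))$; (G$\forall$3) $\forall x(\psi\vee\varphi(x))\to(\psi\vee\forall x\,\varphi(x))$; (G$\exists$1) $\varphi(t)\to\exists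 x\,\varphi(x)$; (G$\exists$2) $\exists x(\psi\to\varphi(x))\to(\psi\to\exists x\,\varphi(x))$ (with $t$ substitutable for $x$ and $x$ not free in $\psi$); (RGL1) $(\bar r\wedge\bar s)\leftrightarrow\overline{\max\{r,s\}}$; (RGL2) $\bar r\to\bar s$ if $r\ge s$, $(\bar r\to\bar s)\leftrightarrow\bar s$ if $r<s$; (RGL3) $\neg\neg\bar r$ for $r<1$. Rules: modus ponens and generalization. A theory $T$ is strongly consistent if $T\nvdash\bar r$ for every rational $r\in(0,1]$; it is maximally strongly consistent (in its language) if it is strongly consistent and every strongly consistent theory $\Sigma\supseteq T$ in the same language equals $T$. A theory $T$ in a language $\mathcal{L}'$ is Henkin if whenever $T\nvdash\forall x\,\varphi(x)$, there is a constant symbol $c\in\mathcal{L}'$ with $T\nvdash\varphi(c)$. *)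

(* Defs.v *)
From mathcomp Require Import all_boot all_order all_algebra.
Set Implicit Arguments. Unset Strict Implicit. Unset Printing Implicit Defensive.
Import Order.TTheory GRing.Theory Num.Theory.

Record lang := Lang {
  Pred : Type; Func : Type; Const : Type;
  parity : Pred -> nat; farity : Func -> nat }.

Definition countable (X : Type) : Prop := exists f : X -> nat, injective f.

Definition countable_lang (L : lang) : Prop :=
  countable (Pred L) /\ countable (Func L) /\ countable (Const L).

Inductive term (L : lang) : Type :=
| Var : nat -> term L
| Cnst : Const L -> term L
| App : forall f : Func L, ('I_(farity f) -> term L) -> term L.
Arguments Var {L}. Arguments Cnst {L}. Arguments App {L}.

Definition unit_rat := {r : rat | ((0 <= r) && (r <= 1))%R}.

Inductive form (L : lang) : Type :=
| Atom : forall p : Pred L, ('I_(parity p) -> term L) -> form L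
| Cst : unit_rat -> form L
| And : form L -> form L -> form L
| Imp : form L -> form L -> form L
| All : nat -> form L -> form L
| Ex : nat -> form L -> form L.
Arguments Atom {L}. Arguments Cst {L}. Arguments And {L}. Arguments Imp {L}.
Arguments All {L}. Arguments Ex {L}.

Definition one_r : unit_rat := exist _ 1%R isT.
Definition Neg {L} (a : form L) : form L := Imp a (Cst one_r).
Definition Or {L} (a b : form L) : form L :=
  And (Imp (Imp a b) b) (Imp (Imp b a) a).
Definition Iff {L} (a b : form L) : form L := And (Imp a b) (Imp b a).

Fixpoint occurs_t {L} (x : nat) (t : term L) : Prop :=
  match t with
  | Var y => x = y
  | Cnst _ => False
  | App f a => exists i, occurs_t x (a i)
  end.

Fixpoint subst_t {L} (x : nat) (s : term L) (t : term L) : term L :=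
  match t with
  | Var y => if y == x then s else Var y
  | Cnst c => Cnst c
  | App f a => App f (fun i => subst_t x s (a i))
  end.

Fixpoint free {L} (x : nat) (phi : form L) : Prop :=
  match phi with
  | Atom p a => exists i, occurs_t x (a i)
  | Cst _ => False
  | And a b | Imp a b => free x a \/ free x b
  | All y a | Ex y a => x <> y /\ free x a
  end.

Fixpoint subst {L} (x : nat) (s : term L) (phi : form L) : form L :=
  match phi with
  | Atom p a => Atom p (fun i => subst_t x s (a i))
  | Cst r => Cst r
  | And a b => And (subst x s a) (subst x s b)
  | Imp a b => Imp (subst x s a) (subst x s b)
  | All y a => if y == x then All y a else All y (subst x s a)
  | Ex y a => if y == x then Ex y a else Ex y (subst x s a)
  end.

Fixpoint substitutable {L} (s : term L) (x : nat) (phi : form L) : Prop :=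
  match phi with
  | Atom _ _ | Cst _ => True
  | And a b | Imp a b => substitutable s x a /\ substitutable s x b
  | All y a => ~ free x (All y a) \/ (~ occurs_t y s /\ substitutable s x a)
  | Ex y a => ~ free x (Ex y a) \/ (~ occurs_t y s /\ substitutable s x a)
  end.

Definition theory (L : lang) := form L -> Prop.

Inductive prov {L} (T : theory L) : form L -> Prop :=
| P_hyp phi : T phi -> prov T phi
| P_G1 a b c : prov T (Imp (Imp a b) (Imp (Imp b c) (Imp a c)))
| P_G2 a b : prov T (Imp (And a b) a)
| P_G3 a b : prov T (Imp (And a b) (And b a))
| P_G4 a : prov T (Imp a (And a a))
| P_G5 a b c : prov T (Iff (Imp a (Imp b c)) (Imp (And a b) c))
| P_G6 a b c : prov T (Imp (Imp (Imp a b) c) (Imp (Imp (Imp b a) c) c))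
| P_G7 a : prov T (Imp (Cst one_r) a)
| P_Gall1 x phi t : substitutable t x phi ->
    prov T (Imp (All x phi) (subst x t phi))
| P_Gall2 x phi psi : ~ free x psi ->
    prov T (Imp (All x (Imp psi phi)) (Imp psi (All x phi)))
| P_Gall3 x phi psi : ~ free x psi ->
    prov T (Imp (All x (Or psi phi)) (Or psi (All x phi)))
| P_Gex1 x phi t : substitutable t x phi ->
    prov T (Imp (subst x t phi) (Ex x phi))
| P_Gex2 x phi psi : ~ free x psi ->
    prov T (Imp (Ex x (Imp psi phi)) (Imp psi (Ex x phi)))
| P_RGL1 (r s m : unit_rat) : sval m = Num.max (sval r) (sval s) ->
    prov T (Iff (And (Cst r) (Cst s)) (Cst m))
| P_RGL2a (r s : unit_rat) : (sval s <= sval r)%R -> prov T (Imp (Cst r) (Cst s))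
| P_RGL2b (r s : unit_rat) : (sval r < sval s)%R ->
    prov T (Iff (Imp (Cst r) (Cst s)) (Cst s))
| P_RGL3 (r : unit_rat) : (sval r < 1)%R -> prov T (Neg (Neg (Cst r)))
| P_MP a b : prov T a -> prov T (Imp a b) -> prov T b
| P_Gen x a : prov T a -> prov T (All x a).

Definition strongly_consistent {L} (T : theory L) : Prop :=
  forall r : unit_rat, (0 < sval r)%R -> ~ prov T (Cst r).

Definition max_strongly_consistent {L} (T : theory L) : Prop :=
  strongly_consistent T /\
  forall S : theory L, (forall phi, T phi -> S phi) -> strongly_consistent S ->
    forall phi, S phi <-> T phi.

Definition henkin {L} (T : theory L) : Prop :=
  forall x (phi : form L), ~ prov T (All x phi) ->
    exists c : Const L, ~ prov T (subst x (Cnst c) phi).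

(* L' extends L: injective, arity-preserving inclusion of symbols *)
Record lang_emb (L L' : lang) := {
  emb_P : Pred L -> Pred L';
  emb_F : Func L -> Func L';
  emb_C : Const L -> Const L';
  emb_P_inj : injective emb_P;
  emb_F_inj : injective emb_F;
  emb_C_inj : injective emb_C;
  emb_par : forall p, parity (emb_P p) = parity p;
  emb_far : forall f, farity (emb_F f) = farity f }.

Fixpoint tr_t {L L'} (e : lang_emb L L') (t : term L) : term L' :=
  match t with
  | Var n => Var n
  | Cnst c => Cnst (emb_C e c)
  | App f a => App (emb_F e f) (fun i => tr_t e (a (cast_ord (emb_far e f) i)))
  end.

Fixpoint tr {L L'} (e : lang_emb L L') (phi : form L) : form L' :=
  match phi with
  | Atom p a => Atom (emb_P e p) (fun i => tr_t e (a (cast_ord (emb_par e p) i)))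
  | Cst r => Cst r
  | And a b => And (tr e a) (tr e b)
  | Imp a b => Imp (tr e a) (tr e b)
  | All x a => All x (tr e a)
  | Ex x a => Ex x (tr e a)
  end.

(* Main.v *)
From mathcomp Require Import all_boot all_order all_algebra.
From Stdlib Require Import FunctionalExtensionality ClassicalEpsilon Classical.
Require Import Defs.
Set Implicit Arguments. Unset Strict Implicit. Unset Printing Implicit Defensive.

Section Syn.
Variable L : lang.

Fixpoint mv_t (t : term L) : nat :=
  match t with
  | Var n => n.+1
  | Cnst _ => 0
  | App f a => \max_(i < farity f) mv_t (a i)
  end.

Fixpoint mv (phi : form L) : nat :=
  match phi with
  | Atom p a => \max_(i < parity p) mv_t (a i)
  | Cst _ => 0
  | And a b | Imp a b => maxn (mv a) (mv b)
  | All y a | Ex y a => maxn y.+1 (mv a)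
  end.

Lemma occ_mv_t y (t : term L) : occurs_t y t -> y < mv_t t.
Proof.
elim: t => [n|c|f a IH] /=; first by move=> ->.
  by [].
move=> [i Hi]; apply: (leq_trans (IH i Hi)); exact: (@leq_bigmax _ (fun i => mv_t (a i)) i).
Qed.

Lemma free_mv y (phi : form L) : free y phi -> y < mv phi.
Proof.
elim: phi => [p a|r|a IHa b IHb|a IHa b IHb|x a IHa|x a IHa] /=.
- move=> [i Hi]; apply: (leq_trans (occ_mv_t Hi)); exact: (@leq_bigmax _ (fun i => mv_t (a i)) i).
- by [].
- by case=> [/IHa|/IHb] H; rewrite leq_max H ?orbT.
- by case=> [/IHa|/IHb] H; rewrite leq_max H ?orbT.
- by case=> _ /IHa H; rewrite leq_max H ?orbT.
- by case=> _ /IHa H; rewrite leq_max H ?orbT.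
Qed.

Lemma subst_t_nocc x s (t : term L) : ~ occurs_t x t -> subst_t x s t = t.
Proof.
elim: t => [n|c|f a IH] /=.
- by case: eqP => // ->.
- by [].
- move=> H; congr App; apply: functional_extensionality => i; apply: IH => Hi; apply: H; by exists i.
Qed.

Lemma subst_nofree x s (phi : form L) : ~ free x phi -> subst x s phi = phi.
Proof.
elim: phi => [p a|r|a IHa b IHb|a IHa b IHb|y a IHa|y a IHa] /= H.
- congr Atom; apply: functional_extensionality => i; apply: subst_t_nocc => Hi; apply: H; by exists i.
- by [].
- by rewrite IHa ?IHb //; tauto.
- by rewrite IHa ?IHb //; tauto.
- case: eqP => // /eqP Hyx; rewrite IHa //; move=> Hf; apply: H; split=> //; by apply/eqP; rewrite eq_sym.
- case: eqP => // /eqP Hyx; rewrite IHa //; move=> Hf; apply: H; split=> //; by apply/eqP; rewrite eq_sym.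
Qed.

Lemma subst_t_id x (t : term L) : subst_t x (Var x) t = t.
Proof.
elim: t => [n|c|f a IH] /=; first by case: eqP => // ->.
  by [].
by congr App; apply: functional_extensionality => i; apply: IH.
Qed.

Lemma subst_id x (phi : form L) : subst x (Var x) phi = phi.
Proof.
elim: phi => [p a|r|a IHa b IHb|a IHa b IHb|y a IHa|y a IHa] /=.
- congr Atom; apply: functional_extensionality => i; apply: subst_t_id.
- by [].
- by rewrite IHa IHb.
- by rewrite IHa IHb.
- by case: eqP => //; rewrite IHa.
- by case: eqP => //; rewrite IHa.
Qed.

Lemma substitutable_id x (phi : form L) : substitutable (Var x) x phi.
Proof.
elim: phi => [p a|r|a IHa b IHb|a IHa b IHb|y a IHa|y a IHa] //=; try tauto.
- case: (eqVneq y x) => [->|Hyx]; first by left; case.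
  by right; split=> // Hy; move: Hyx; rewrite Hy eqxx.
- case: (eqVneq y x) => [->|Hyx]; first by left; case.
  by right; split=> // Hy; move: Hyx; rewrite Hy eqxx.
Qed.

Lemma substitutable_fresh t x (phi : form L) :
  (forall y, occurs_t y t -> mv phi <= y) -> substitutable t x phi.
Proof.
elim: phi => [p a|r|a IHa b IHb|a IHa b IHb|y a IHa|y a IHa] //= H.
- split; [apply: IHa|apply: IHb] => z /H; apply: leq_trans; by rewrite leq_max leqnn ?orbT.
- split; [apply: IHa|apply: IHb] => z /H; apply: leq_trans; by rewrite leq_max leqnn ?orbT.
- right; split.
    by move=> /H; rewrite geq_max ltnn.
  apply: IHa => z /H; apply: leq_trans; by rewrite leq_max leqnn ?orbT.
- right; split.
    by move=> /H; rewrite geq_max ltnn.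
  apply: IHa => z /H; apply: leq_trans; by rewrite leq_max leqnn ?orbT.
Qed.

Lemma occ_subst_t y x s (t : term L) :
  occurs_t y (subst_t x s t) -> (occurs_t y t /\ y <> x) \/ occurs_t y s.
Proof.
elim: t => [n|c|f a IH] /=.
- case: eqP => [->|/eqP Hnx]; first by right.
  move=> /= ->; left; split=> // Hn; move: Hnx; by rewrite Hn eqxx.
- by [].
- move=> [i /IH [[Hi Hyx]|Hs]]; last by right.
  by left; split=> //; exists i.
Qed.

Lemma free_subst y x s (phi : form L) :
  free y (subst x s phi) -> (free y phi /\ y <> x) \/ occurs_t y s.
Proof.
elim: phi => [p a|r|a IHa b IHb|a IHa b IHb|z a IHa|z a IHa] /=.
- move=> [i /occ_subst_t [[Hi Hyx]|Hs]]; last by right.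
  by left; split=> //; exists i.
- by [].
- case=> [/IHa|/IHb]; tauto.
- case=> [/IHa|/IHb]; tauto.
- case: eqP => [->|_] /=.
    move=> [Hyx Hf]; left; split=> //; split=> //.
  move=> [Hyz /IHa]; tauto.
- case: eqP => [->|_] /=.
    move=> [Hyx Hf]; left; split=> //; split=> //.
  move=> [Hyz /IHa]; tauto.
Qed.
End Syn.

Section Syn2.
Variable L : lang.

Lemma mv_nofree w (phi : form L) : mv phi <= w -> ~ free w phi.
Proof. by move=> H /free_mv; rewrite ltnNge H. Qed.

Lemma mv_t_nocc w (t : term L) : mv_t t <= w -> ~ occurs_t w t.
Proof. by move=> H /occ_mv_t; rewrite ltnNge H. Qed.

Lemma DS2_t w x s (t : term L) : mv_t t <= w ->
  subst_t w s (subst_t x (Var w) t) = subst_t x s t.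
Proof.
elim: t => [n|c|f a IH] /=.
- case: eqP => [_|_] /=; first by rewrite eqxx.
  by move=> H; case: eqP => // Hn; move: H; rewrite Hn ltnn.
- by [].
- move=> H; congr App; apply: functional_extensionality => i; apply: IH.
  apply: leq_trans H; exact: (@leq_bigmax _ (fun i => mv_t (a i)) i).
Qed.

Lemma DS2 w x s (phi : form L) : mv phi <= w ->
  subst w s (subst x (Var w) phi) = subst x s phi.
Proof.
elim: phi => [p a|r|a IHa b IHb|a IHa b IHb|y a IHa|y a IHa] /= H.
- congr Atom; apply: functional_extensionality => i; apply: DS2_t.
  apply: leq_trans H; exact: (@leq_bigmax _ (fun i => mv_t (a i)) i).
- by [].
- by move: H; rewrite geq_max => /andP[H1 H2]; rewrite IHa ?IHb.
- by move: H; rewrite geq_max => /andP[H1 H2]; rewrite IHa ?IHb.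
- move: H; rewrite geq_max => /andP[H1 H2].
  case: eqP => [->|_] /=.
    case: eqP => // _; rewrite subst_nofree //; exact: mv_nofree.
  case: eqP => [Hy|_]; first by move: H1; rewrite Hy ltnn.
  by rewrite IHa.
- move: H; rewrite geq_max => /andP[H1 H2].
  case: eqP => [->|_] /=.
    case: eqP => // _; rewrite subst_nofree //; exact: mv_nofree.
  case: eqP => [Hy|_]; first by move: H1; rewrite Hy ltnn.
  by rewrite IHa.
Qed.

Lemma DS2s w x s (phi : form L) : mv phi <= w -> substitutable s x phi ->
  substitutable s w (subst x (Var w) phi).
Proof.
elim: phi => [p a|r|a IHa b IHb|a IHa b IHb|y a IHa|y a IHa] //= H.
- move: H; rewrite geq_max => /andP[H1 H2] [Ha Hb]; split; [exact: IHa|exact: IHb].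
- move: H; rewrite geq_max => /andP[H1 H2] [Ha Hb]; split; [exact: IHa|exact: IHb].
- move: H; rewrite geq_max => /andP[H1 H2].
  case: eqP => [->|/eqP Hyx] /=.
    by move=> _; left; move=> [_ /(mv_nofree H2)].
  case=> [Hnf|[Hno Hs]].
    left; move=> [_]; rewrite subst_nofree; first exact: mv_nofree.
    move=> Hf; apply: Hnf; split=> // Hxy; move: Hyx; by rewrite Hxy eqxx.
  by right; split=> //; apply: IHa.
- move: H; rewrite geq_max => /andP[H1 H2].
  case: eqP => [->|/eqP Hyx] /=.
    by move=> _; left; move=> [_ /(mv_nofree H2)].
  case=> [Hnf|[Hno Hs]].
    left; move=> [_]; rewrite subst_nofree; first exact: mv_nofree.
    move=> Hf; apply: Hnf; split=> // Hxy; move: Hyx; by rewrite Hxy eqxx.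
  by right; split=> //; apply: IHa.
Qed.

Lemma free_foldr y (phi : form L) l :
  free y (foldr All phi l) -> y \notin l /\ free y phi.
Proof.
elim: l => [|z l IH] //= [Hyz /IH [Hl Hf]]; split=> //.
by rewrite in_cons negb_or Hl andbT; apply/eqP.
Qed.

Lemma subst_foldr x s (phi : form L) l : x \notin l ->
  subst x s (foldr All phi l) = foldr All (subst x s phi) l.
Proof.
elim: l => [|z l IH] //=; rewrite in_cons negb_or => /andP[Hxz Hl].
by rewrite eq_sym (negbTE Hxz) IH.
Qed.

Definition clo x (phi : form L) :=
  foldr All phi [seq y <- iota 0 (mv phi) | y != x].

Lemma clo_free x y (phi : form L) : free y (clo x phi) -> y = x.
Proof.
move=> /free_foldr [Hl Hf]; apply/eqP; move: Hl; rewrite mem_filter mem_iota /=.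
by rewrite (free_mv Hf) andbT negbK.
Qed.

Lemma subst_clo x s (phi : form L) :
  subst x s (clo x phi) = foldr All (subst x s phi) [seq y <- iota 0 (mv phi) | y != x].
Proof. by rewrite /clo subst_foldr // mem_filter eqxx. Qed.

End Syn2.

Section Prov.
Variable L : lang.
Implicit Types (H : theory L) (a b c : form L).

Lemma iffl H a b : prov H (Iff a b) -> prov H (Imp a b).
Proof. move=> h; exact: P_MP h (P_G2 _ _ _). Qed.

Lemma iffr H a b : prov H (Iff a b) -> prov H (Imp b a).
Proof. move=> h; exact: P_MP (P_MP h (P_G3 _ _ _)) (P_G2 _ _ _). Qed.

Lemma ptrans H a b c : prov H (Imp a b) -> prov H (Imp b c) -> prov H (Imp a c).
Proof. move=> h1 h2; exact: P_MP h2 (P_MP h1 (P_G1 _ _ _ _)). Qed.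

Lemma pid H a : prov H (Imp a a).
Proof. exact: ptrans (P_G4 _ a) (P_G2 _ _ _). Qed.

Lemma pK H a b : prov H (Imp a (Imp b a)).
Proof. exact: P_MP (P_G2 _ a b) (iffr (P_G5 _ a b a)). Qed.

Lemma pKr H a b : prov H a -> prov H (Imp b a).
Proof. move=> h; exact: P_MP h (pK _ _ _). Qed.

Lemma pconj H a b : prov H a -> prov H b -> prov H (And a b).
Proof.
move=> ha hb; have h := P_MP (pid H (And a b)) (iffr (P_G5 H a b (And a b))).
exact: P_MP hb (P_MP ha h).
Qed.

Lemma pexch H a b c : prov H (Imp a (Imp b c)) -> prov H (Imp b (Imp a c)).
Proof.
move=> h; have h1 := P_MP h (iffl (P_G5 H a b c)).
have h2 := ptrans (P_G3 H b a) h1.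
exact: P_MP h2 (iffr (P_G5 H b a c)).
Qed.

Lemma pprefix H a b c : prov H (Imp b c) -> prov H (Imp (Imp a b) (Imp a c)).
Proof. move=> h; exact: P_MP h (pexch (P_G1 H a b c)). Qed.

Lemma psuffix H a b c : prov H (Imp a b) -> prov H (Imp (Imp b c) (Imp a c)).
Proof. move=> h; exact: P_MP h (P_G1 H a b c). Qed.

Lemma pcontr H a b : prov H (Imp a (Imp a b)) -> prov H (Imp a b).
Proof.
move=> h; exact: ptrans (P_G4 H a) (P_MP h (iffl (P_G5 H a a b))).
Qed.

Lemma pmp_under H a b c : prov H (Imp a b) -> prov H (Imp a (Imp b c)) -> prov H (Imp a c).
Proof. move=> h1 h2; apply: pcontr; exact: ptrans h1 (pexch h2). Qed.

Lemma pmono H1 H2 phi : (forall psi, H1 psi -> H2 psi) -> prov H1 phi -> prov H2 phi.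
Proof.
move=> Hs; elim; try (by constructor); try (by move=> ? /Hs; constructor).
all: try (move=> a b _ ha _ hb; exact: P_MP ha hb).
all: move=> x a _ h; exact: P_Gen h.
Qed.

Lemma pinst H x phi : prov H (All x phi) -> prov H phi.
Proof.
move=> h; have := P_MP h (P_Gall1 H (substitutable_id x phi)); by rewrite subst_id.
Qed.

Lemma ppeel H phi l : prov H (foldr All phi l) -> prov H phi.
Proof. elim: l => [|z l IH] //= /pinst; exact: IH. Qed.

Lemma pgens H phi l : prov H phi -> prov H (foldr All phi l).
Proof. elim: l => [|z l IH] //= h; exact: P_Gen (IH h). Qed.

Definition ext H a : theory L := fun psi => H psi \/ psi = a.
Definition closed (a : form L) := forall y, ~ free y a.

Lemma deduction H a phi : closed a -> prov (ext H a) phi -> prov H (Imp a phi).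
Proof.
move=> Ha; elim; try (by move=> *; apply: pKr; constructor).
- move=> psi [h|->]; [apply: pKr; exact: P_hyp|exact: pid].
- move=> b c _ hb _ hc; exact: pmp_under hb hc.
- move=> x b _ hb; exact: P_MP (P_Gen x hb) (P_Gall2 _ _ (Ha x)).
Qed.

End Prov.

Section CMap.
Variables (P F : Type) (pa : P -> nat) (fa : F -> nat).
Local Notation LL C := (@Lang P F C pa fa).
Variables (C1 C2 : Type).

Section Fix.
Variable (s : C1 -> term (LL C2)).

Fixpoint cmap_t (t : term (LL C1)) : term (LL C2) :=
  match t with
  | Var n => Var n
  | Cnst c => s c
  | App f a => @App (LL C2) f (fun i => cmap_t (a i))
  end.

Fixpoint cmap (phi : form (LL C1)) : form (LL C2) :=
  match phi with
  | Atom p a => @Atom (LL C2) p (fun i => cmap_t (a i))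
  | Cst r => Cst r
  | And a b => And (cmap a) (cmap b)
  | Imp a b => Imp (cmap a) (cmap b)
  | All y a => All y (cmap a)
  | Ex y a => Ex y (cmap a)
  end.

Lemma occ_cmap y t : occurs_t y (cmap_t t) -> occurs_t y t \/ exists c, occurs_t y (s c).
Proof.
elim: t => [n|c|f a IH] /=; first by left.
  by right; exists c.
move=> [i /IH [Hi|Hc]]; last by right.
by left; exists i.
Qed.

Lemma free_cmap x phi : (forall c, ~ occurs_t x (s c)) -> free x (cmap phi) -> free x phi.
Proof.
move=> Hs; elim: phi => [p a|r|a IHa b IHb|a IHa b IHb|y a IHa|y a IHa] //=.
- move=> [i /occ_cmap [Hi|[c Hc]]]; [by exists i|by case: (Hs c)].
- by case=> [/IHa|/IHb]; tauto.
- by case=> [/IHa|/IHb]; tauto.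
- by case=> ? /IHa.
- by case=> ? /IHa.
Qed.

Lemma cmap_subst_t x u t : (forall c, ~ occurs_t x (s c)) ->
  cmap_t (subst_t x u t) = subst_t x (cmap_t u) (cmap_t t).
Proof.
move=> Hs; elim: t => [n|c|f a IH] /=.
- by case: eqP.
- by rewrite subst_t_nocc.
- by congr App; apply: functional_extensionality => i; apply: IH.
Qed.

Lemma cmap_subst x u phi : (forall c, ~ occurs_t x (s c)) ->
  cmap (subst x u phi) = subst x (cmap_t u) (cmap phi).
Proof.
move=> Hs; elim: phi => [p a|r|a IHa b IHb|a IHa b IHb|y a IHa|y a IHa] /=.
- by congr Atom; apply: functional_extensionality => i; apply: cmap_subst_t.
- by [].
- by rewrite IHa IHb.
- by rewrite IHa IHb.
- by case: eqP => _ //=; rewrite IHa.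
- by case: eqP => _ //=; rewrite IHa.
Qed.

Lemma sub_cmap N x u phi : (forall c y, occurs_t y (s c) -> N <= y) ->
  mv phi <= N -> x < N -> substitutable u x phi ->
  substitutable (cmap_t u) x (cmap phi).
Proof.
move=> Hs; have Hx : forall z, z < N -> forall c, ~ occurs_t z (s c).
  by move=> z Hz c /Hs; rewrite leqNgt Hz.
elim: phi => [p a|r|a IHa b IHb|a IHa b IHb|y a IHa|y a IHa] //=.
- rewrite geq_max => /andP[H1 H2] HxN [Ha Hb]; split; [exact: IHa|exact: IHb].
- rewrite geq_max => /andP[H1 H2] HxN [Ha Hb]; split; [exact: IHa|exact: IHb].
- rewrite geq_max => /andP[H1 H2] HxN [Hnf|[Hno Hsub]].
    by left; move=> [Hxy /(free_cmap (Hx x HxN))]; move=> Hf; apply: Hnf.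
  right; split; last exact: IHa.
  by move=> /occ_cmap [//|[c /Hs]]; rewrite leqNgt H1.
- rewrite geq_max => /andP[H1 H2] HxN [Hnf|[Hno Hsub]].
    by left; move=> [Hxy /(free_cmap (Hx x HxN))]; move=> Hf; apply: Hnf.
  right; split; last exact: IHa.
  by move=> /occ_cmap [//|[c /Hs]]; rewrite leqNgt H1.
Qed.
End Fix.

Lemma PT (T1 : theory (LL C1)) (T2 : theory (LL C2)) phi : prov T1 phi ->
  exists N, forall s : C1 -> term (LL C2), (forall c y, occurs_t y (s c) -> N <= y) ->
    (forall psi, T1 psi -> T2 (cmap s psi)) -> prov T2 (cmap s phi).
Proof.
have Hx N (s : C1 -> term (LL C2)) z : (forall c y, occurs_t y (s c) -> N <= y) ->
   z < N -> forall c, ~ occurs_t z (s c).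
  by move=> Hs Hz c /Hs; rewrite leqNgt Hz.
elim; try (by exists 0 => s _ _; rewrite /Iff /Neg /Or /=; constructor).
- by move=> psi Hpsi; exists 0 => s _ HT; apply: P_hyp; apply: HT.
- move=> x phi0 t Hsub; exists (maxn x.+1 (mv phi0)) => s Hs _ /=.
  rewrite cmap_subst; last by apply: (Hx _ _ _ Hs); rewrite leq_max leqnn.
  apply: P_Gall1; apply: (sub_cmap Hs); by rewrite ?leq_max ?leqnn ?orbT.
- move=> x phi0 psi Hnf; exists x.+1 => s Hs _ /=.
  apply: P_Gall2 => /(free_cmap (Hx _ _ _ Hs (leqnn _))); exact: Hnf.
- move=> x phi0 psi Hnf; exists x.+1 => s Hs _ /=.
  apply: P_Gall3 => /(free_cmap (Hx _ _ _ Hs (leqnn _))); exact: Hnf.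
- move=> x phi0 t Hsub; exists (maxn x.+1 (mv phi0)) => s Hs _ /=.
  rewrite cmap_subst; last by apply: (Hx _ _ _ Hs); rewrite leq_max leqnn.
  apply: P_Gex1; apply: (sub_cmap Hs); by rewrite ?leq_max ?leqnn ?orbT.
- move=> x phi0 psi Hnf; exists x.+1 => s Hs _ /=.
  apply: P_Gex2 => /(free_cmap (Hx _ _ _ Hs (leqnn _))); exact: Hnf.
all: try (move=> r s0 m Hm; exists 0 => s _ _ /=; exact: (P_RGL1 _ Hm)).
all: try (move=> r s0 Hm; exists 0 => s _ _ /=; exact: (P_RGL2b _ Hm)).
all: try (move=> r s0 Hm; exists 0 => s _ _ /=; exact: (P_RGL2a _ Hm)).
all: try (move=> r Hm; exists 0 => s _ _ /=; exact: (P_RGL3 _ Hm)).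
- move=> a b _ [N1 H1] _ [N2 H2]; exists (maxn N1 N2) => s Hs HT.
  apply: P_MP (H1 s _ HT) (H2 s _ HT) => c y /Hs; apply: leq_trans; by rewrite leq_max leqnn ?orbT.
- move=> x a _ [N H]; exists N => s Hs HT /=; exact: P_Gen (H s Hs HT).
Qed.

End CMap.

From mathcomp Require Import lra zify.
Import Order.TTheory GRing.Theory Num.Theory.

Section Henkin.
Variables (P F C : Type) (pa : P -> nat) (fa : F -> nat).
Local Notation L2 := (@Lang P F (C + nat) pa fa).

Fixpoint mc_t (t : term L2) : nat :=
  match t with
  | Var _ => 0
  | Cnst (inl _) => 0
  | Cnst (inr j) => j.+1
  | App f a => \max_(i < fa f) mc_t (a i)
  end.

Fixpoint mc (phi : form L2) : nat :=
  match phi with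
  | Atom p a => \max_(i < pa p) mc_t (a i)
  | Cst _ => 0
  | And a b | Imp a b => maxn (mc a) (mc b)
  | All _ a | Ex _ a => mc a
  end.

Definition sigk (k w : nat) (d : C + nat) : term L2 :=
  match d with
  | inl c => @Cnst L2 (inl c)
  | inr j => if j == k then Var w else @Cnst L2 (inr j)
  end.

Lemma sigk_occ k w d y : occurs_t y (sigk k w d) -> y = w.
Proof. by case: d => [c|j] //=; case: eqP. Qed.

Lemma cmap_sigk_t k w (t : term L2) : mc_t t <= k -> cmap_t (sigk k w) t = t.
Proof.
elim: t => [n|[c|j]|f a IH] //=.
- by case: eqP => // ->; rewrite ltnn.
- move=> H; congr App; apply: functional_extensionality => i; apply: IH.
  apply: leq_trans H; exact: (@leq_bigmax _ (fun i => mc_t (a i)) i).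
Qed.

Lemma cmap_sigk k w (phi : form L2) : mc phi <= k -> cmap (sigk k w) phi = phi.
Proof.
elim: phi => [p a|r|a IHa b IHb|a IHa b IHb|y a IHa|y a IHa] //=.
- move=> H; congr Atom; apply: functional_extensionality => i; apply: cmap_sigk_t.
  apply: leq_trans H; exact: (@leq_bigmax _ (fun i => mc_t (a i)) i).
- by rewrite geq_max => /andP[H1 H2]; rewrite IHa ?IHb.
- by rewrite geq_max => /andP[H1 H2]; rewrite IHa ?IHb.
- by move=> H; rewrite IHa.
- by move=> H; rewrite IHa.
Qed.

Lemma mc_subst_t x u (t : term L2) : mc_t (subst_t x u t) <= maxn (mc_t t) (mc_t u).
Proof.
elim: t => [n|[c|j]|f a IH] /=.
- by case: eqP => _; rewrite ?leq_max ?leqnn ?orbT.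
- by [].
- by rewrite leq_max leqnn.
- apply/bigmax_leqP => i _; apply: leq_trans (IH i) _; rewrite geq_max; apply/andP; split; last by rewrite leq_max leqnn orbT.
  rewrite leq_max; apply/orP; left; exact: (@leq_bigmax _ (fun i => mc_t (a i)) i).
Qed.

Lemma mc_subst x u (phi : form L2) : mc (subst x u phi) <= maxn (mc phi) (mc_t u).
Proof.
elim: phi => [p a|r|a IHa b IHb|a IHa b IHb|y a IHa|y a IHa] /=.
- apply/bigmax_leqP => i _; apply: leq_trans (mc_subst_t x u (a i)) _.
  rewrite geq_max; apply/andP; split; last by rewrite leq_max leqnn orbT.
  rewrite leq_max; apply/orP; left.
  exact: (@leq_bigmax _ (fun i => mc_t (a i)) i).
- by [].
- move: IHa IHb; lia.
- move: IHa IHb; lia.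
- case: eqP => _ /=; lia.
- case: eqP => _ /=; lia.
Qed.

Lemma mc_foldr (phi : form L2) l : mc (foldr All phi l) = mc phi.
Proof. by elim: l. Qed.

Definition chif x (phi : form L2) : form L2 :=
  All (mv (clo x phi)) (subst x (Var (mv (clo x phi))) (clo x phi)).
Definition Bf x (phi : form L2) k (r : unit_rat) : form L2 :=
  Imp (subst x (@Cnst L2 (inr k)) (clo x phi)) (Cst r).

Lemma chif_closed x phi : closed (chif x phi).
Proof.
move=> y /= [Hyz /free_subst [[/clo_free Hx Hyx]|/= Hy]] //.
Qed.

Lemma Bf_closed x phi k r : closed (Bf x phi k r).
Proof.
by move=> y /= [/free_subst [[/clo_free Hx Hyx]|/= Hy]|].
Qed.

Lemma mc_chif x phi : mc (chif x phi) <= mc phi.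
Proof.
rewrite /chif /=; apply: leq_trans (mc_subst _ _ _) _.
by rewrite /clo mc_foldr /= maxn0.
Qed.

Lemma mc_Bf x phi k r : mc (Bf x phi k r) <= maxn (mc phi) k.+1.
Proof.
rewrite /Bf /= maxn0; apply: leq_trans (mc_subst _ _ _) _.
by rewrite /clo mc_foldr.
Qed.

Local Open Scope ring_scope.

Lemma henkin_step (H : theory L2) x phi k (r t : unit_rat) :
  strongly_consistent H -> (forall psi, H psi -> (mc psi <= k)%N) -> (mc phi <= k)%N ->
  0 < sval t -> prov (ext H (chif x phi)) (Cst t) -> 0 < sval r -> sval r < sval t ->
  strongly_consistent (ext H (Bf x phi k r)).
Proof.
move=> SC Hk Hphi Ht Hchi Hr0 Hrt s Hs Hpr.
set psi0 := clo x phi; set z := mv psi0.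
have DTc := deduction (@chif_closed x phi) Hchi.
have DTB := deduction (@Bf_closed x phi k r) Hpr.
pose u := if sval s <= sval r then s else r.
have Hu0 : 0 < sval u by rewrite /u; case: ifP.
have Hus : sval u <= sval s by rewrite /u; case: ifP => // /negbT; rewrite -ltNge => /ltW.
have Hur : sval u <= sval r by rewrite /u; case: ifP.
have h1 : prov H (Imp (Bf x phi k r) (Cst u)) := ptrans DTB (P_RGL2a H Hus).
have [N HN] := @PT _ _ _ _ _ _ H H _ h1.
pose w := maxn N (maxn (mv psi0) x.+1).
have HwN : (N <= w)%N by rewrite leq_max leqnn.
have Hwm : (mv psi0 <= w)%N by rewrite !leq_max leqnn orbT.
have Hwx : (x < w)%N by rewrite !leq_max leqnn !orbT.
have h2' : prov H (cmap (sigk k w) (Imp (Bf x phi k r) (Cst u))).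
  apply: HN => [c y /sigk_occ ->//|psi Hpsi]; rewrite cmap_sigk //; exact: Hk.
have h2 : prov H (Imp (Imp (subst x (Var w) psi0) (Cst r)) (Cst u)).
  move: h2'; rewrite /= cmap_subst; last first.
    by move=> c /sigk_occ Hxw; move: Hwx; rewrite Hxw ltnn.
  rewrite /= eqxx cmap_sigk //; by rewrite /psi0 /clo mc_foldr.
set A := subst x (Var w) psi0.
have hOr : prov H (Or (Cst u) (Imp (Cst r) A)).
  apply: pconj.
    apply: ptrans (iffl (P_G5 H (Cst u) (Cst r) A)) _.
    apply: psuffix; apply: iffr (P_RGL1 H (m:=r) _); by rewrite max_r.
  exact: P_MP h2 (P_G6 H A (Cst r) (Cst u)).
have h3 : prov H (Or (Cst u) (All w (Imp (Cst r) A))).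
  by apply: P_MP (P_Gen w hOr) (P_Gall3 _ _ _).
have hb : prov H (Imp (All w A) (chif x phi)).
  have Hsub : substitutable (Var z) w A.
    apply: DS2s => //; apply: substitutable_fresh => y /= ->; exact: leqnn.
  have hb1 := P_Gall1 H Hsub; rewrite /A DS2 // in hb1.
  apply: P_MP (P_Gen z hb1) (P_Gall2 _ _ _).
  move=> /= [Hzw /free_subst [[Hf _]|/= Hzw']]; last by apply: Hzw.
  exact: (mv_nofree (leqnn z) Hf).
have h4 : prov H (Imp (All w (Imp (Cst r) A)) (Cst u)).
  apply: ptrans (P_Gall2 _ _ _) _; first by [].
  apply: ptrans (pprefix (Cst r) hb) _.
  apply: ptrans (pprefix (Cst r) DTc) _.
  apply: ptrans (iffl (P_RGL2b H Hrt)) _.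
  apply: P_RGL2a; exact: le_trans Hur (ltW Hrt).
have h5 := P_MP (P_MP h3 (P_G3 _ _ _)) (P_G2 _ _ _).
exact: SC u Hu0 (P_MP h4 h5).
Qed.

End Henkin.

Section Compact.
Variable L : lang.
Variable Hn : nat -> theory L.
Hypothesis Hch : forall n psi, Hn n psi -> Hn n.+1 psi.

Lemma chain_mono n m psi : (n <= m)%N -> Hn n psi -> Hn m psi.
Proof. elim: m => [|m IH]; first by rewrite leqn0 => /eqP ->. 
rewrite leq_eqVlt => /orP[/eqP -> //|]; rewrite ltnS => /IH h /h; exact: Hch.
Qed.

Lemma compact phi : prov (fun psi => exists n, Hn n psi) phi -> exists n, prov (Hn n) phi.
Proof.
elim; try (by exists 0%N; constructor).
all: try (by move=> r s m Hm; exists 0%N; exact: (P_RGL1 _ Hm)).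
all: try (by move=> r s Hm; exists 0%N; exact: (P_RGL2b _ Hm)).
- by move=> psi [n Hpsi]; exists n; constructor.
- move=> a b _ [n1 h1] _ [n2 h2]; exists (maxn n1 n2); apply: P_MP.
    apply: pmono h1 => psi; apply: chain_mono; exact: leq_maxl.
  apply: pmono h2 => psi; apply: chain_mono; exact: leq_maxr.
- by move=> x a _ [n h]; exists n; apply: P_Gen.
Qed.

Lemma SC_union : (forall n, strongly_consistent (Hn n)) ->
  strongly_consistent (fun psi => exists n, Hn n psi).
Proof. move=> HS r Hr /compact [n h]; exact: HS n r Hr h. Qed.
End Compact.

Section Enc.
Variables (P F C : Type) (pa : P -> nat) (fa : F -> nat).
Local Notation L2 := (@Lang P F (C + nat) pa fa).
Variables (gp : P -> nat) (gf : F -> nat) (gc : C -> nat).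
Hypotheses (gp_inj : injective gp) (gf_inj : injective gf) (gc_inj : injective gc).

Lemma pickle_inj (T : countType) : injective (@pickle T).
Proof. exact: pcan_inj pickleK. Qed.

Fixpoint enc_t (t : term L2) : GenTree.tree nat :=
  match t with
  | Var n => GenTree.Node 0 [:: GenTree.Leaf n]
  | Cnst (inl c) => GenTree.Node 1 [:: GenTree.Leaf (gc c)]
  | Cnst (inr j) => GenTree.Node 2 [:: GenTree.Leaf j]
  | App f a => GenTree.Node 3 (GenTree.Leaf (gf f) :: [seq enc_t (a i) | i <- enum 'I_(fa f)])
  end.

Fixpoint enc (phi : form L2) : GenTree.tree nat :=
  match phi with
  | Atom p a => GenTree.Node 0 (GenTree.Leaf (gp p) :: [seq enc_t (a i) | i <- enum 'I_(pa p)])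
  | Cst r => GenTree.Node 1 [:: GenTree.Leaf (pickle (sval r))]
  | And a b => GenTree.Node 2 [:: enc a; enc b]
  | Imp a b => GenTree.Node 3 [:: enc a; enc b]
  | All y a => GenTree.Node 4 [:: GenTree.Leaf y; enc a]
  | Ex y a => GenTree.Node 5 [:: GenTree.Leaf y; enc a]
  end.

Lemma enc_t_inj : injective enc_t.
Proof.
elim=> [n|[c|j]|f a IH] [n'|[c'|j']|f' a'] //=.
- by case=> ->.
- by case=> /gc_inj ->.
- by case=> ->.
- case=> /gf_inj Hf; subst f' => /eq_in_map Hm; congr App.
  apply: functional_extensionality => i; apply: IH; apply: Hm; exact: mem_enum.
Qed.

Lemma enc_inj : injective enc.
Proof.
elim=> [p a|r|a IHa b IHb|a IHa b IHb|y a IHa|y a IHa]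
       [p' a'|r'|a' b'|a' b'|y' a'|y' a'] //=.
- case=> /gp_inj Hp; subst p' => /eq_in_map Hm; congr Atom.
  apply: functional_extensionality => i; apply: enc_t_inj; apply: Hm; exact: mem_enum.
- by case=> /pickle_inj /val_inj ->.
- by case=> /IHa -> /IHb ->.
- by case=> /IHa -> /IHb ->.
- by case=> -> /IHa ->.
- by case=> -> /IHa ->.
Qed.

Definition code (phi : form L2) : nat := pickle (enc phi).
Lemma code_inj : injective code.
Proof. by move=> a b /pickle_inj /enc_inj. Qed.

Definition pcode (p : nat * form L2) : nat := pickle (p.1, code p.2).
Lemma pcode_inj : injective pcode.
Proof. by move=> [x a] [y b] /pickle_inj [-> /code_inj ->]. Qed.

Definition pe (m : nat) : nat * form L2 :=
  epsilon (inhabits (0%N, Cst one_r)) (fun p => pcode p = m).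

Lemma pe_code p : pe (pcode p) = p.
Proof.
apply: pcode_inj; rewrite /pe; apply: (epsilon_spec (inhabits (0%N, Cst one_r)) (fun q => pcode q = pcode p)).
by exists p.
Qed.
End Enc.

Section Main.
Variables (P F C : Type) (pa : P -> nat) (fa : F -> nat).
Local Notation LL := (@Lang P F C pa fa).
Local Notation L2 := (@Lang P F (C + nat) pa fa).
Variables (gp : P -> nat) (gf : F -> nat) (gc : C -> nat).
Hypotheses (gp_inj : injective gp) (gf_inj : injective gf) (gc_inj : injective gc).
Variable T : theory LL.
Hypothesis SCT : strongly_consistent T.

Definition inlc (c : C) : term L2 := @Cnst L2 (inl c).
Definition H0 : theory L2 := fun psi => exists phi, T phi /\ psi = cmap inlc phi.

Definition rho N (d : C + nat) : term LL :=
  match d with inl c => @Cnst LL c | inr j => Var (N + j) end.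

Lemma rho_inlc N phi : cmap (rho N) (cmap inlc phi) = phi.
Proof.
have Ht : forall t : term LL, cmap_t (rho N) (cmap_t inlc t) = t.
  elim=> [n|c|f a IH] //=; congr App; apply: functional_extensionality => i; exact: IH.
elim: phi => [p a|r|a IHa b IHb|a IHa b IHb|y a IHa|y a IHa] /=; try by rewrite ?IHa ?IHb.
by congr Atom; apply: functional_extensionality => i; exact: Ht.
Qed.

Lemma mc_inlc phi : mc (cmap inlc phi) = 0%N.
Proof.
have Ht : forall t : term LL, mc_t (cmap_t inlc t) = 0%N.
  elim=> [n|c|f a IH] //=; apply/eqP; rewrite -leqn0; apply/bigmax_leqP => i _; by rewrite IH.
elim: phi => [p a|r|a IHa b IHb|a IHa b IHb|y a IHa|y a IHa] /=; try by rewrite ?IHa ?IHb.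
apply/eqP; rewrite -leqn0; apply/bigmax_leqP => i _; by rewrite Ht.
Qed.

Lemma SC_H0 : strongly_consistent H0.
Proof.
move=> r Hr h; have [N HN] := @PT _ _ _ _ _ _ H0 T _ h.
apply: (SCT Hr); apply: (HN (rho N)).
  by move=> [c|j] y //= ->; exact: leq_addr.
by move=> psi [phi [Hphi ->]]; rewrite rho_inlc.
Qed.

Local Notation pe := (@pe P F C pa fa gp gf gc).
Local Notation pcode := (@pcode P F C pa fa gp gf gc).

Fixpoint Ssum m : nat :=
  match m with
  | 0 => mc (pe 0).2
  | k.+1 => (Ssum k + mc (pe k.+1).2)%N
  end.
Definition W m := (m + Ssum m)%N.

Lemma W_mc m : (mc (pe m).2 <= W m)%N.
Proof. rewrite /W; case: m => [|m] /=; lia. Qed.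

Lemma W_lt m : (W m < W m.+1)%N.
Proof. rewrite /W /=; lia. Qed.

Lemma half_proof (t : unit_rat) : ((0 <= sval t / 2) && (sval t / 2 <= 1))%R.
Proof. case/andP: (svalP t) => h1 h2; apply/andP; split; lra. Qed.
Definition half (t : unit_rat) : unit_rat := exist _ (sval t / 2)%R (half_proof t).

Definition tpick (H : theory L2) (a : form L2) : unit_rat :=
  epsilon (inhabits one_r) (fun t => (0 < sval t)%R /\ prov (ext H a) (Cst t)).

Definition addf (H : theory L2) m : form L2 :=
  if excluded_middle_informative (strongly_consistent (ext H (chif (pe m).1 (pe m).2)))
  then chif (pe m).1 (pe m).2 else Bf (pe m).1 (pe m).2 (W m) (half (tpick H (chif (pe m).1 (pe m).2))).

Fixpoint Hs m : theory L2 :=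
  match m with
  | 0 => H0
  | k.+1 => ext (Hs k) (addf (Hs k) k)
  end.

Lemma Hs_chain m psi : Hs m psi -> Hs m.+1 psi.
Proof. by left. Qed.

Lemma Hs_mc m psi : Hs m psi -> (mc psi <= W m)%N.
Proof.
elim: m psi => [|m IH] psi /=.
  by move=> [phi [_ ->]]; rewrite mc_inlc.
case=> [/IH h|->]; first by apply: leq_trans h (ltnW (W_lt m)).
rewrite /addf; destruct excluded_middle_informative.
  apply: leq_trans (mc_chif _ _) _; apply: leq_trans (W_mc m) (ltnW (W_lt m)).
apply: leq_trans (mc_Bf _ _ _ _) _; rewrite geq_max W_lt andbT.
apply: leq_trans (W_mc m) (ltnW (W_lt m)).
Qed.

Lemma Hs_SC m : strongly_consistent (Hs m).
Proof.
elim: m => [|m IH] /=; first exact: SC_H0.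
rewrite /addf; destruct excluded_middle_informative as [|Hn] => //.
have Hex : exists t : unit_rat, (0 < sval t)%R /\ prov (ext (Hs m) (chif (pe m).1 (pe m).2)) (Cst t).
  apply: NNPP => Hne; apply: Hn => t Ht Hp; apply: Hne; by exists t.
have [Ht Hp] := epsilon_spec (inhabits one_r) _ Hex.
apply: (henkin_step IH (@Hs_mc m) (W_mc m) Ht Hp).
  rewrite /half /=; lra.
rewrite /half /=; lra.
Qed.

Definition Hinf : theory L2 := fun psi => exists m, Hs m psi.

Lemma Hinf_SC : strongly_consistent Hinf.
Proof. apply: SC_union; [exact: Hs_chain|exact: Hs_SC]. Qed.

Lemma Hinf_henkin x phi : Hinf (chif x phi) \/
  exists r : unit_rat, (0 < sval r)%R /\ Hinf (Bf x phi (W (pcode (x, phi))) r).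
Proof.
set m := pcode (x, phi).
have Hpe : pe m = (x, phi) by rewrite /m pe_code.
have Hadd : Hs m.+1 (addf (Hs m) m) by right.
move: Hadd; rewrite /addf Hpe /=; destruct excluded_middle_informative as [Hc|Hc] => Hadd.
  by left; exists m.+1.
right; exists (half (tpick (Hs m) (chif x phi))); split; last by exists m.+1.
have Hex : exists t : unit_rat, (0 < sval t)%R /\ prov (ext (Hs m) (chif x phi)) (Cst t).
  apply: NNPP => Hne; apply Hc => t Ht Hp; apply: Hne; by exists t.
have [Ht _] := epsilon_spec (inhabits one_r) _ Hex.
rewrite /half /=; lra.
Qed.

Local Notation code := (@code P F C pa fa gp gf gc).

Fixpoint Ms n : theory L2 :=
  match n with
  | 0 => Hinf
  | k.+1 => fun psi => Ms k psi \/ (code psi = k /\ strongly_consistent (ext (Ms k) psi))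
  end.

Lemma Ms_SC n : strongly_consistent (Ms n).
Proof.
elim: n => [|n IH] /=; first exact: Hinf_SC.
case: (classic (exists psi, code psi = n /\ strongly_consistent (ext (Ms n) psi))).
  move=> [psi [Hc HS]] r Hr h; apply: (HS r Hr); apply: pmono h => th [h1|[h2 _]].
    by left.
  by right; apply: (code_inj gp_inj gf_inj gc_inj); rewrite h2 Hc.
move=> Hne r Hr h; apply: (IH r Hr); apply: pmono h => th [//|[h2 h3]].
by case: Hne; exists th.
Qed.

Definition Tstar : theory L2 := fun psi => exists n, Ms n psi.

Lemma Tstar_SC : strongly_consistent Tstar.
Proof. apply: SC_union; [by move=> n psi; left|exact: Ms_SC]. Qed.

Lemma Tstar_max : max_strongly_consistent Tstar.
Proof.
split; first exact: Tstar_SC.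
move=> S HTS HS phi; split; last exact: HTS.
move=> Hphi; exists (code phi).+1; right; split=> //.
move=> r Hr h; apply: (HS r Hr); apply: pmono h => th [h|->//].
by apply: HTS; exists (code phi).
Qed.

Lemma Hinf_Tstar psi : Hinf psi -> Tstar psi.
Proof. by exists 0%N. Qed.

Lemma chif_prov (H : theory L2) x phi : prov H (chif x phi) -> prov H (All x phi).
Proof.
move=> h; apply: P_Gen; apply: (@ppeel _ _ _ [seq y <- iota 0 (mv phi) | y != x]).
have Hs := @DS2s _ (mv (clo x phi)) x (Var x) (clo x phi) (leqnn _) (substitutable_id x (clo x phi)).
have := P_MP h (P_Gall1 H Hs).
by rewrite DS2 // subst_id.
Qed.

Lemma Tstar_henkin : henkin Tstar.
Proof.
move=> x phi Hn.
case: (Hinf_henkin x phi) => [Hc|[r [Hr HB]]].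
  by case: Hn; apply: chif_prov; apply: P_hyp; apply: Hinf_Tstar.
exists (inr (W (pcode (x, phi)))) => h.
apply: (Tstar_SC Hr); apply: P_MP (P_hyp (Hinf_Tstar HB)).
rewrite /clo subst_clo; exact: pgens.
Qed.

End Main.

Section Emb.
Variables (P F C : Type) (pa : P -> nat) (fa : F -> nat).
Local Notation LL := (@Lang P F C pa fa).
Local Notation L2 := (@Lang P F (C + nat) pa fa).

Definition emb : lang_emb LL L2.
Proof.
refine (@Build_lang_emb LL L2 id id inl _ _ _ (fun p => erefl) (fun f => erefl)).
- by move=> ? ?.
- by move=> ? ?.
- by move=> ? ? [].
Defined.

Lemma tr_emb phi : tr emb phi = cmap (@inlc P F C pa fa) phi.
Proof.
have Ht : forall t : term LL, tr_t emb t = cmap_t (@inlc P F C pa fa) t.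
  elim=> [n|c|f a IH] //=; congr App; apply: functional_extensionality => i.
  by rewrite cast_ord_id IH.
elim: phi => [p a|r|a IHa b IHb|a IHa b IHb|y a IHa|y a IHa] /=; try by rewrite ?IHa ?IHb.
congr Atom; apply: functional_extensionality => i; by rewrite cast_ord_id Ht.
Qed.
End Emb.

Theorem mainTheorem10 (L : lang) (T : theory L) :
  countable_lang L -> strongly_consistent T ->
  exists (L' : lang) (e : lang_emb L L') (T' : theory L'),
    countable_lang L' /\ max_strongly_consistent T' /\ henkin T' /\
    (forall phi, T phi -> T' (tr e phi)).
Proof.
destruct L as [P F C pa fa].
move=> [[gp gp_inj] [[gf gf_inj] [gc gc_inj]]] SCT.
exists (@Lang P F (C + nat) pa fa), (@emb P F C pa fa).
exists (@Tstar P F C pa fa gp gf gc T).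
split; [|split; [|split]].
- split; first by exists gp.
  split; first by exists gf.
  exists (fun d : C + nat => pickle (match d with inl c => inl (gc c) | inr n => @inr nat nat n end)).
  move=> [c|n] [c'|n'] /pickle_inj //=; first by case=> /gc_inj ->.
  by case=> ->.
- exact: Tstar_max.
- exact: Tstar_henkin.
- move=> phi Hphi; rewrite tr_emb; apply: Hinf_Tstar; exists 0%N; by exists phi.
Qed.
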